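(* Let $\alpha>0$ and let $W\in\mathbb{R}^{\mathcal{Q}\times\mathcal{X}}$ be a symmetric workload matrix, written $W=(W^+,W^-)$ with $W^+\in\mathbb{R}^{\mathcal{Q}\times\mathcal{X}^+}$. Then $\gamma_2(W)=\gamma_2(W^+)$ and $\gamma_2(W,\alpha)=\gamma_2(W^+,\alpha)$. Moreover, if for some $U^+\in\mathbb{R}^{\mathcal{Q}\times\mathcal{X}^+}$ \[ \gamma_2(W^+,\alpha)=\frac{W^+\bullet U^+-\alpha\|U^+\|_1}{\gamma_2^*(U^+)}, \] then \[ \gamma_2(W,\alpha)=\frac{W\bullet U-\alpha\|U\|_1}{\gamma_2^*(U)}, \] where $U=\frac12(U^+,U^-)\in\mathbb{R}^{\mathcal{Q}\times\mathcal{X}}$ and the submatrix $U^-$, indexed by $\mathcal{X}^-$, has entries $u^-_{q,-x}=-u^+_{q,x}$ for all $x\in\mathcal{X}^+$, $q\in\mathcal{Q}$.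
   Context: $W$ is symmetric if $\mathcal{X}$ is partitioned into $\mathcal{X}^+,\mathcal{X}^-$ with a bijection $x\mapsto-x$ from $\mathcal{X}^+$ to $\mathcal{X}^-$ such that $w_{q,-x}=-w_{q,x}$ for all $q$ and $x\in\mathcal{X}^+$; $W^+,W^-$ are the column restrictions to $\mathcal{X}^+,\mathcal{X}^-$. $M\bullet N=\sum m_{i,j}n_{i,j}$, $\|U\|_1=\sum|u_{i,j}|$. For matrices, $\|M\|_{1\to2}$ = max column $\ell_2$ norm, $\|M\|_{2\to\infty}$ = max row $\ell_2$ norm, $\|M\|_{1\to\infty}$ = max absolute entry; $\gamma_2(M)=\min\{\|R\|_{2\to\infty}\|A\|_{1\to2}:RA=M\}$, $\gamma_2(W,\alpha)=\min\{\gamma_2(\widetilde W):\|W-\widetilde W\|_{1\to\infty}\le\alpha/2\}$, and $\gamma_2^*(U)=\max\{U\bullet V:\gamma_2(V)\le1\}$. *)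

(* Defs.v *)
From mathcomp Require Import all_boot all_order all_algebra.
From mathcomp Require Import boolp classical_sets reals.
Set Implicit Arguments. Unset Strict Implicit. Unset Printing Implicit Defensive.
Import Order.TTheory GRing.Theory Num.Theory.
Local Open Scope ring_scope.
Local Open Scope classical_set_scope.

Section Gamma2.
Variable R : realType.

Definition norm2inf m n (M : 'M[R]_(m, n)) : R :=
  \big[Num.max/0]_(i < m) Num.sqrt (\sum_(j < n) M i j ^+ 2).

Definition norm12 m n (M : 'M[R]_(m, n)) : R :=
  \big[Num.max/0]_(j < n) Num.sqrt (\sum_(i < m) M i j ^+ 2).

Definition norm1inf m n (M : 'M[R]_(m, n)) : R :=
  \big[Num.max/0]_(i < m) \big[Num.max/0]_(j < n) `|M i j|.

Definition entry_norm1 m n (U : 'M[R]_(m, n)) : R :=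
  \sum_(i < m) \sum_(j < n) `|U i j|.

Definition mdot m n (M N : 'M[R]_(m, n)) : R :=
  \sum_(i < m) \sum_(j < n) M i j * N i j.

Definition gamma2 m n (M : 'M[R]_(m, n)) : R :=
  inf [set c | exists k (Rm : 'M[R]_(m, k)) (A : 'M[R]_(k, n)),
                 Rm *m A = M /\ c = norm2inf Rm * norm12 A].

Definition gamma2_approx m n (W : 'M[R]_(m, n)) (alpha : R) : R :=
  inf [set c | exists Wt : 'M[R]_(m, n),
                 norm1inf (W - Wt) <= alpha / 2 /\ c = gamma2 Wt].

Definition gamma2_dual m n (U : 'M[R]_(m, n)) : R :=
  sup [set c | exists V : 'M[R]_(m, n), gamma2 V <= 1 /\ c = mdot U V].

End Gamma2.

(* Main.v *)
Require Import Defs.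
From mathcomp Require Import all_boot all_order all_algebra.
From mathcomp Require Import boolp classical_sets reals.
From mathcomp Require Import ring lra.
Import Order.TTheory GRing.Theory Num.Theory.
Local Open Scope ring_scope.

Lemma bigmax0_ge0 {R : realType} k (F : 'I_k -> R) : 0 <= \big[Num.max/0]_(i < k) F i.
Proof. rewrite unlock /=; elim: (index_enum _) => //= a l IH; by rewrite le_max IH orbT. Qed.

Lemma bigmax0_le {R : realType} k (F : 'I_k -> R) c :
  0 <= c -> (forall i, F i <= c) -> \big[Num.max/0]_(i < k) F i <= c.
Proof. by move=> c0 h; apply: bigmax_le. Qed.

Lemma bigmax0_ge {R : realType} k (F : 'I_k -> R) i : F i <= \big[Num.max/0]_(i < k) F i.
Proof. exact: le_bigmax. Qed.

Lemma inf_dom {R : realType} (A B : set R) :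
  (B !=set0)%classic -> (forall x, A x -> 0 <= x) ->
  (forall y, B y -> exists2 x, A x & x <= y) -> inf A <= inf B.
Proof.
move=> neB A0 dom; apply: lb_le_inf => // y /dom [x Ax le].
apply: le_trans le; apply: ge_inf => //; exists 0 => z Az; exact: A0.
Qed.

Lemma sqrt_le_sq {R : realType} (x c : R) : 0 <= c -> x <= c ^+ 2 -> Num.sqrt x <= c.
Proof.
move=> c0 h; apply: le_trans (ler_wsqrtr h) _.
by rewrite sqrtr_sqr ger0_norm.
Qed.

Lemma norm12_le {R : realType} k N (A : 'M[R]_(k, N)) c : 0 <= c ->
  (forall j, \sum_(i < k) A i j ^+ 2 <= c ^+ 2) -> norm12 A <= c.
Proof. move=> c0 h; apply: bigmax0_le => // j; exact: sqrt_le_sq. Qed.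

Lemma colsq_le {R : realType} k N (A : 'M[R]_(k, N)) j :
  \sum_(i < k) A i j ^+ 2 <= norm12 A ^+ 2.
Proof.
have h := bigmax0_ge _ (fun j => Num.sqrt (\sum_(i < k) A i j ^+ 2)) j.
rewrite -[X in X <= _]sqr_sqrtr; last by apply: sumr_ge0 => i _; exact: sqr_ge0.
by rewrite lerXn2r // ?nnegrE ?sqrtr_ge0 // /norm12 bigmax0_ge0.
Qed.

Lemma norm12_ge0 {R : realType} k N (A : 'M[R]_(k, N)) : 0 <= norm12 A.
Proof. exact: bigmax0_ge0. Qed.

Lemma norm2inf_ge0 {R : realType} k N (A : 'M[R]_(k, N)) : 0 <= norm2inf A.
Proof. exact: bigmax0_ge0. Qed.

Lemma gamma2_ge0 {R : realType} k N (M : 'M[R]_(k, N)) : 0 <= gamma2 M.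
Proof.
apply: lb_le_inf.
  by exists (norm2inf (1%:M : 'M[R]_k) * norm12 M), k, 1%:M, M; rewrite mul1mx.
by move=> x [p [Rm [A [_ ->]]]]; rewrite mulr_ge0 ?norm12_ge0 ?norm2inf_ge0.
Qed.

Lemma gamma2_mulr {R : realType} k N N' (V : 'M[R]_(k, N)) (B : 'M[R]_(N, N')) :
  (forall p (A : 'M[R]_(p, N)), norm12 (A *m B) <= norm12 A) ->
  gamma2 (V *m B) <= gamma2 V.
Proof.
move=> hB; apply: inf_dom.
- by exists (norm2inf (1%:M : 'M[R]_k) * norm12 V), k, 1%:M, V; rewrite mul1mx.
- by move=> x [p [Rm [A [_ ->]]]]; rewrite mulr_ge0 ?norm12_ge0 ?norm2inf_ge0.
- move=> y [p [Rm [A [eV ->]]]].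
  exists (norm2inf Rm * norm12 (A *m B)).
    by exists p, Rm, (A *m B); rewrite mulmxA eV.
  by rewrite ler_wpM2l ?norm2inf_ge0.
Qed.

Definition B1 {R : realType} n : 'M[R]_(n + n, n) := col_mx 1%:M 0.
Definition B2 {R : realType} n : 'M[R]_(n, n + n) := row_mx 1%:M (- 1%:M).
Definition B3 {R : realType} n : 'M[R]_(n + n, n) := 2^-1 *: col_mx 1%:M (- 1%:M).

Lemma B1E {R : realType} k n (A : 'M[R]_(k, n + n)) : A *m B1 n = lsubmx A.
Proof. by rewrite -[A in A *m _]hsubmxK /B1 mul_row_col mulmx1 mulmx0 addr0. Qed.

Lemma B2E {R : realType} k n (A : 'M[R]_(k, n)) : A *m B2 n = row_mx A (- A).
Proof. by rewrite /B2 mul_mx_row mulmx1 mulmxN mulmx1. Qed.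

Lemma B3E {R : realType} k n (A : 'M[R]_(k, n + n)) :
  A *m B3 n = 2^-1 *: (lsubmx A - rsubmx A).
Proof.
by rewrite /B3 -scalemxAr -[A in A *m _]hsubmxK mul_row_col !mulmx1 mulmxN mulmx1.
Qed.

Lemma B1_ok {R : realType} n p (A : 'M[R]_(p, n + n)) : norm12 (A *m B1 n) <= norm12 A.
Proof.
rewrite B1E; apply: norm12_le; first exact: norm12_ge0.
move=> j; apply: le_trans _ (@colsq_le _ _ _ A (lshift n j)).
by apply: ler_sum => i _; rewrite mxE.
Qed.

Lemma B2_ok {R : realType} n p (A : 'M[R]_(p, n)) : norm12 (A *m B2 n) <= norm12 A.
Proof.
rewrite B2E; apply: norm12_le; first exact: norm12_ge0.
move=> j; rewrite -(splitK j); case: (split j) => j' /=.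
  by apply: le_trans _ (@colsq_le _ _ _ A j'); apply: ler_sum => i _; rewrite row_mxEl.
by apply: le_trans _ (@colsq_le _ _ _ A j'); apply: ler_sum => i _; rewrite row_mxEr mxE sqrrN.
Qed.

Lemma B3_ok {R : realType} n p (A : 'M[R]_(p, n + n)) : norm12 (A *m B3 n) <= norm12 A.
Proof.
rewrite B3E; apply: norm12_le; first exact: norm12_ge0.
move=> j.
have hl := @colsq_le _ _ _ A (lshift n j); have hr := @colsq_le _ _ _ A (rshift n j).
apply: le_trans (_ : 2^-1 * (\sum_(i < p) A i (lshift n j) ^+ 2 + \sum_(i < p) A i (rshift n j) ^+ 2) <= _); last by lra.
rewrite -big_split mulr_sumr; apply: ler_sum => i _; rewrite !mxE.
set x := A i _; set y := A i _.
have h0 : 0 <= (x + y) ^+ 2 by exact: sqr_ge0.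
apply: (@le_trans _ _ (2^-1 * (x^+2 + y^+2))); first nra.
exact: lexx.
Qed.

Lemma norm1inf_le {R : realType} k N (X : 'M[R]_(k, N)) c : 0 <= c ->
  (forall i j, `|X i j| <= c) -> norm1inf X <= c.
Proof. by move=> c0 h; apply: bigmax0_le => // i; apply: bigmax0_le. Qed.

Lemma norm1inf_ge {R : realType} k N (X : 'M[R]_(k, N)) i j : `|X i j| <= norm1inf X.
Proof.
apply: le_trans (bigmax0_ge _ (fun j => `|X i j|) j) _.
exact: (bigmax0_ge _ (fun i => \big[Num.max/0]_(j < N) `|X i j|) i).
Qed.

Lemma norm1inf_ge0 {R : realType} k N (X : 'M[R]_(k, N)) : 0 <= norm1inf X.
Proof. exact: bigmax0_ge0. Qed.

Lemma norm1inf_B1 {R : realType} k n (X : 'M[R]_(k, n + n)) : norm1inf (X *m B1 n) <= norm1inf X.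
Proof.
rewrite B1E; apply: norm1inf_le; first exact: norm1inf_ge0.
by move=> i j; rewrite mxE norm1inf_ge.
Qed.

Lemma norm1inf_B2 {R : realType} k n (X : 'M[R]_(k, n)) : norm1inf (X *m B2 n) <= norm1inf X.
Proof.
rewrite B2E; apply: norm1inf_le; first exact: norm1inf_ge0.
move=> i j; rewrite -(splitK j); case: (split j) => j' /=.
  by rewrite row_mxEl norm1inf_ge.
by rewrite row_mxEr mxE normrN norm1inf_ge.
Qed.

Lemma norm1inf0 {R : realType} k N c : 0 <= c -> norm1inf (0 : 'M[R]_(k, N)) <= c.
Proof. by move=> c0; apply: norm1inf_le => // i j; rewrite mxE normr0. Qed.

Lemma part1 {R : realType} m n (Wp : 'M[R]_(m, n)) : gamma2 (row_mx Wp (- Wp)) = gamma2 Wp.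
Proof.
apply/eqP; rewrite eq_le; apply/andP; split.
  by rewrite -B2E; apply: gamma2_mulr => p A; exact: B2_ok.
rewrite -{1}(row_mxKl Wp (- Wp)) -B1E; apply: gamma2_mulr => p A; exact: B1_ok.
Qed.

Lemma part2 {R : realType} (alpha : R) m n (Wp : 'M[R]_(m, n)) : 0 < alpha ->
  gamma2_approx (row_mx Wp (- Wp)) alpha = gamma2_approx Wp alpha.
Proof.
move=> a0; have a2 : 0 <= alpha / 2 by lra.
apply/eqP; rewrite eq_le; apply/andP; split.
- apply: inf_dom.
  + by exists (gamma2 Wp), Wp; split => //; rewrite subrr norm1inf0.
  + by move=> x [Wt [_ ->]]; exact: gamma2_ge0.
  + move=> y [Wt [h ->]]; exists (gamma2 (Wt *m B2 n)).
      exists (Wt *m B2 n); split => //.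
      by rewrite -B2E -mulmxBl; apply: le_trans (@norm1inf_B2 _ _ _ _) h.
    by apply: gamma2_mulr => p A; exact: B2_ok.
- apply: inf_dom.
  + by exists (gamma2 (row_mx Wp (- Wp))), (row_mx Wp (- Wp)); split => //; rewrite subrr norm1inf0.
  + by move=> x [Wt [_ ->]]; exact: gamma2_ge0.
  + move=> y [Wt [h ->]]; exists (gamma2 (Wt *m B1 n)).
      exists (Wt *m B1 n); split => //.
      by rewrite -{1}(row_mxKl Wp (- Wp)) -B1E -mulmxBl; apply: le_trans (@norm1inf_B1 _ _ _ _) h.
    by apply: gamma2_mulr => p A; exact: B1_ok.
Qed.

Lemma mdotE {R : realType} m n (Up : 'M[R]_(m, n)) (V1 V2 : 'M[R]_(m, n)) :
  mdot (2^-1 *: row_mx Up (- Up)) (row_mx V1 V2) = mdot Up (2^-1 *: (V1 - V2)).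
Proof.
rewrite /mdot scale_row_mx; apply: eq_bigr => i _; rewrite big_split_ord /= -big_split /=.
apply: eq_bigr => j _; rewrite !row_mxEl !row_mxEr !mxE /=; ring.
Qed.

Lemma part3_dot {R : realType} m n (Wp Up : 'M[R]_(m, n)) :
  mdot (row_mx Wp (- Wp)) (2^-1 *: row_mx Up (- Up)) = mdot Wp Up.
Proof.
rewrite /mdot scale_row_mx; apply: eq_bigr => i _; rewrite big_split_ord /= -big_split /=.
apply: eq_bigr => j _; rewrite !row_mxEl !row_mxEr !mxE /=; by field.
Qed.

Lemma part3_norm {R : realType} m n (Up : 'M[R]_(m, n)) :
  entry_norm1 (2^-1 *: row_mx Up (- Up)) = entry_norm1 Up.
Proof.
rewrite /entry_norm1 scale_row_mx; apply: eq_bigr => i _; rewrite big_split_ord /= -big_split /=.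
apply: eq_bigr => j _; rewrite !row_mxEl !row_mxEr !mxE /= !normrM normrN.
rewrite ger0_norm ?invr_ge0 ?ler0n //; by field.
Qed.

Lemma part3_dual {R : realType} m n (Up : 'M[R]_(m, n)) :
  gamma2_dual (2^-1 *: row_mx Up (- Up)) = gamma2_dual Up.
Proof.
rewrite /gamma2_dual; congr sup; apply/seteqP; split => x /= [V [hV ->]].
- exists (V *m B3 n); split.
    by apply: le_trans hV; apply: gamma2_mulr => p A; exact: B3_ok.
  by rewrite B3E -{1}(hsubmxK V) mdotE.
- exists (row_mx V (- V)); split.
    by rewrite -part1 in hV.
  rewrite mdotE; congr mdot; apply/matrixP => i j; rewrite !mxE; by field.
Qed.

Theorem lemma3p10 (R : realType) (alpha : R) (m n : nat) (Wp : 'M[R]_(m, n)) :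
  0 < alpha ->
  let W : 'M[R]_(m, n + n) := row_mx Wp (- Wp) in
  gamma2 W = gamma2 Wp /\
  gamma2_approx W alpha = gamma2_approx Wp alpha /\
  (forall Up : 'M[R]_(m, n),
     gamma2_approx Wp alpha
       = (mdot Wp Up - alpha * entry_norm1 Up) / gamma2_dual Up ->
     let U : 'M[R]_(m, n + n) := (2^-1) *: row_mx Up (- Up) in
     gamma2_approx W alpha
       = (mdot W U - alpha * entry_norm1 U) / gamma2_dual U).
Proof.
move=> a0 W; rewrite /W; split; first exact: part1.
split; first exact: part2.
move=> Up h; rewrite ?/U part2 // h part3_dot part3_norm part3_dual //.
Qed.
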